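(* Let $N\in\mathbb N$, let $\{\pi_n\in\Pi\}_{n=1}^N$ be policies chosen by a learner in the online protocol described in the context, and let $\{w_n>0\}_{n=1}^N$ be weights, $w_{1:N}=\sum_{n=1}^N w_n$. Then $$\mathbb E\Big[\sum_{n=1}^{N}\frac{w_n J(\pi_n)}{w_{1:N}}\Big]\le J(\pi^* )+C_{\pi^*}\Big(\epsilon_\Pi^w+\mathbb E\Big[\frac{\mathrm{regret}^w(\Pi)}{w_{1:N}}\Big]\Big),$$ where $\mathrm{regret}^w(\Pi)=\max_{\pi\in\Pi}\sum_{n=1}^N\big(w_n\tilde f_n(\pi_n)-w_n\tilde f_n(\pi)\big)$ and the expectation is over the sampling of the $\tilde f_n$.
   Context: Imitation learning setting. $\Pi$ is a compact convex subset of a normed space with norm $\|\cdot\|$ (dual norm $\|\cdot\|_*$); its elements are (parameters of) policies. Each policy $\pi$ has an expected cost $J(\pi)\in\mathbb R$ and induces a distribution $d_\pi$ over state–time pairs $(s,t)$; $\pi_s$ is the action distribution of $\pi$ at state $s$. There is a fixed expert policy $\pi^*$, a nonnegative function $D(\pi^*_s\|\pi_s)$ and a constant $C_{\pi^*}\ge 0$ such that $J(\pi)-J(\pi^* )\le C_{\pi^*}\,\mathbb E_{(s,t)\sim d_\pi}[D(\pi^*_s\|\pi_s)]$ for all $\pi\in\Pi$. Define $F(\pi',\pi)=\mathbb E_{(s,t)\sim d_{\pi'}}[D(\pi^*_s\|\pi_s)]$. Online protocol: in round $n$ the learner picks $\pi_n$ based only on information from rounds $1,\dots,n-1$; then the per-round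 cost $f_n(\pi)=F(\pi_n,\pi)$ is defined and a random function $\tilde f_n$ is sampled which is an unbiased estimate of $f_n$ given $\pi_n$ (i.e. $\mathbb E[\tilde f_n(\pi)\mid \text{past},\pi_n]=f_n(\pi)$ for all $\pi$). The constant $\epsilon_\Pi^w$ is such that for all $N\in\mathbb N$ and all weights $\{\theta_n>0\}_{n=1}^N$ with $\sum_n\theta_n=1$: $\mathbb E\big[\max_{\{\pi_n\in\Pi\}}\min_{\pi\in\Pi}\sum_{n=1}^N\theta_n\tilde f_n(\pi)\big]\le\epsilon_\Pi^w$. *)

(* Defs.v *)
From HB Require Import structures.
From mathcomp Require Import all_boot all_order all_algebra.
From mathcomp Require Import all_classical all_reals all_analysis.
From mathcomp Require Import measurable_realfun.
Set Implicit Arguments. Unset Strict Implicit. Unset Printing Implicit Defensive.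
Import Order.TTheory GRing.Theory Num.Theory.
Import numFieldNormedType.Exports.
Local Open Scope classical_set_scope.
Local Open Scope ring_scope.

Definition convex_subset (R : realType) (V : normedModType R) (A : set V) :=
  forall x y, A x -> A y -> forall t : R, 0 <= t <= 1 -> A (t *: x + (1 - t) *: y).

Definition is_filtration d (Omega : measurableType d) (G : nat -> set (set Omega)) :=
  [/\ (forall n, sigma_algebra setT (G n)),
      (forall n A, G n A -> measurable A) &
      (forall n m, (n <= m)%N -> G n `<=` G m)].

(** G-measurability of real-, extended-real- and policy-valued maps
    (policy space carries its Borel structure: preimages of open sets). *)
Definition Gmeas_R d (Omega : measurableType d) (R : realType)
  (G : set (set Omega)) (f : Omega -> R) :=
  forall B : set R, measurable B -> G (f @^-1` B).

Definition Gmeas_eR d (Omega : measurableType d) (R : realType)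
  (G : set (set Omega)) (f : Omega -> \bar R) :=
  forall B : set (\bar R), measurable B -> G (f @^-1` B).

Definition Gmeas_V d (Omega : measurableType d) (R : realType) (V : normedModType R)
  (G : set (set Omega)) (f : Omega -> V) :=
  forall U : set V, open U -> G (f @^-1` U).

Definition is_cond_exp d (Omega : measurableType d) (R : realType)
  (P : probability Omega R) (G : set (set Omega)) (X Y : Omega -> \bar R) :=
  Gmeas_eR G Y /\
  forall A, G A -> (\int[P]_(x in A) X x = \int[P]_(x in A) Y x)%E.

(** F(pi', pi) = E_{(s,t) ~ d_{pi'}} [ D(pi*_s || pi_s) ], where
    Dfun pi (s,t) = D(pi*_s || pi_s) (the expert pi* is fixed). *)
Definition Fcost dS (S : measurableType dS) (R : realType) (V : normedModType R)
  (dist : V -> probability S R) (Dfun : V -> S -> R) (pi' pi : V) : \bar R :=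
  (\int[dist pi']_x (Dfun pi x)%:E)%E.

(** Inner quantity of epsilon_Pi^w for horizon M and weights theta:
    max over sequences {pi_n in Pi} of min over pi in Pi of
    sum_n theta_n ftilde_n(pi), where ftilde_n is the estimate sampled when
    the learner plays pi_n (ft n w pi_n pi). Max/min are sup/inf. *)
Definition eps_inner d (Omega : measurableType d) (R : realType) (V : normedModType R)
  (Pol : set V) (ft : nat -> Omega -> V -> V -> R) (M : nat) (theta : nat -> R)
  (w : Omega) : \bar R :=
  ereal_sup [set ereal_inf [set (\sum_(n < M) theta n * ft n w (s n) p)%:E | p in Pol]
            | s in [set s : nat -> V | forall n, (n < M)%N -> Pol (s n)]].

(** Weighted regret regret^w(Pi) = max_{pi in Pi} sum_n (w_n ftilde_n(pi_n) - w_n ftilde_n(pi)),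
    with ftilde_n(.) = ft n omega (pi_n omega) (.). *)
Definition wregret d (Omega : measurableType d) (R : realType) (V : normedModType R)
  (Pol : set V) (ft : nat -> Omega -> V -> V -> R) (pi : nat -> Omega -> V)
  (N : nat) (wt : nat -> R) (w : Omega) : \bar R :=
  ereal_sup [set (\sum_(n < N) (wt n * ft n w (pi n w) (pi n w)
                                - wt n * ft n w (pi n w) p))%:E | p in Pol].

(* Main.v *)
Require Import Defs.
From HB Require Import structures.
From mathcomp Require Import all_boot all_order all_algebra.
From mathcomp Require Import all_classical all_reals all_analysis.
From mathcomp Require Import measurable_realfun.
From mathcomp Require Import lra ring.
Import Order.TTheory GRing.Theory Num.Theory.
Import numFieldNormedType.Exports.
Local Open Scope classical_set_scope.
Local Open Scope ring_scope.

Lemma mono_int d (T : measurableType d) (R : realType)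
  (mu : {measure set T -> \bar R}) (f g : T -> \bar R) :
  measurable_fun setT f -> measurable_fun setT g -> (forall x, (f x <= g x)%E) ->
  (\int[mu]_x f x <= \int[mu]_x g x)%E.
Proof.
move=> mf mg fg; rewrite integralE [leRHS]integralE leeB//.
- apply: (ge0_le_integral mu measurableT (fun x _ => funepos_ge0 f x)
     (measurable_funepos mf) (measurable_funepos mg)).
  by move=> x _; apply: (@funepos_le _ _ setT f g (fun y _ => fg y) x (in_setT x)).
- apply: (ge0_le_integral mu measurableT (fun x _ => funeneg_ge0 g x)
     (measurable_funeneg mg) (measurable_funeneg mf)).
  by move=> x _; apply: (@funeneg_le _ _ setT f g (fun y _ => fg y) x (in_setT x)).
Qed.

Lemma integrable_of_lb d (T : measurableType d) (R : realType)
  (mu : {measure set T -> \bar R}) (f h : T -> \bar R) :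
  measurable_fun setT f -> mu.-integrable setT h -> (forall x, (h x <= f x)%E) ->
  (\int[mu]_x f x != +oo)%E -> mu.-integrable setT f.
Proof.
move=> mf ih hf fno; apply/integrableP; split => //.
have mh : measurable_fun setT h by case/integrableP: ih.
rewrite -[fun x => _]/(abse \o f) fune_abse.
rewrite (ge0_integralD mu measurableT (fun x _ => funepos_ge0 f x)
     (measurable_funepos mf) (fun x _ => funeneg_ge0 f x) (measurable_funeneg mf)).
have negf : (\int[mu]_x f^\- x < +oo)%E.
  apply: le_lt_trans (integral_funeneg_lt_pinfty measurableT ih).
  apply: (ge0_le_integral mu measurableT (fun x _ => funeneg_ge0 f x)
     (measurable_funeneg mf) (measurable_funeneg mh)).
  by move=> x _; apply: (@funeneg_le _ _ setT h f (fun y _ => hf y) x (in_setT x)).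
have negf0 : (0 <= \int[mu]_x f^\- x)%E.
  by apply: integral_ge0 => x _; exact: funeneg_ge0.
rewrite lte_add_pinfty //.
move: fno; rewrite integralE.
have fin : (\int[mu]_x f^\- x)%E \is a fin_num by rewrite ge0_fin_numE.
rewrite ltey; apply: contra => /eqP ->; rewrite -(fineK fin) //.
Qed.

Theorem lemma1
  (R : realType) (V : normedModType R) (Pol : set V)
  (HPcompact : compact Pol) (HPconvex : convex_subset Pol)
  (* costs, state-time distributions, divergence *)
  (J : V -> R) (Jstar : R) (Cstar : R) (HC : 0 <= Cstar)
  (dS : measure_display) (S : measurableType dS)
  (dist : V -> probability S R) (Dfun : V -> S -> R)
  (HD0 : forall p, Pol p -> forall x, 0 <= Dfun p x)
  (HDm : forall p, Pol p -> measurable_fun setT (Dfun p))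
  (Hperf : forall p, Pol p ->
     ((J p - Jstar)%:E <= Cstar%:E * Fcost dist Dfun p p)%E)
  (* probability space and information structure *)
  (dO : measure_display) (Omega : measurableType dO) (P : probability Omega R)
  (G : nat -> set (set Omega)) (HG : is_filtration G)
  (* number of rounds, learner's policies, sampled estimates *)
  (N : nat) (HN : (0 < N)%N)
  (pi : nat -> Omega -> V)
  (HpiP : forall n w, (n < N)%N -> Pol (pi n w))
  (Hpimeas : forall n, (n < N)%N -> Gmeas_V (G n) (pi n))
  (ft : nat -> Omega -> V -> V -> R)
  (Hftmeas : forall n p' p, Gmeas_R (G n.+1) (fun w => ft n w p' p))
  (Hunbiased : forall n, (n < N)%N ->
     forall rho : Omega -> V, Gmeas_V (G n) rho -> (forall w, Pol (rho w)) ->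
       P.-integrable setT (fun w => (ft n w (pi n w) (rho w))%:E) /\
       is_cond_exp P (G n) (fun w => (ft n w (pi n w) (rho w))%:E)
                           (fun w => Fcost dist Dfun (pi n w) (rho w)))
  (* the constant epsilon_Pi^w *)
  (eps : R)
  (Heps : forall (M : nat) (theta : nat -> R),
     (forall n, (n < M)%N -> 0 < theta n) -> \sum_(n < M) theta n = 1 ->
     measurable_fun setT (eps_inner Pol ft M theta) /\
     (\int[P]_w eps_inner Pol ft M theta w <= eps%:E)%E)
  (* weights *)
  (wt : nat -> R) (Hwt : forall n, (n < N)%N -> 0 < wt n)
  (* the expectations in the statement are well defined *)
  (HJint : forall n, (n < N)%N -> P.-integrable setT (fun w => (J (pi n w))%:E))
  (Hregm : measurable_fun setT (wregret Pol ft pi N wt)) :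
  let W := \sum_(n < N) wt n in
  (\int[P]_w (\sum_(n < N) wt n * J (pi n w) / W)%:E
   <= Jstar%:E + Cstar%:E *
        (eps%:E + \int[P]_w (wregret Pol ft pi N wt w * (W^-1)%:E)))%E.
Proof.
cbv zeta; set W := \sum_(n < N) wt n.
case: HG => HGs HGm _.
have GsetT : forall n, G n setT.
  move=> n; case: (HGs n) => G0 GC _; rewrite -(setD0 setT); exact: GC.
have Gcst : forall n (q : V), Gmeas_V (G n) (fun _ => q).
  move=> n q U _; case: (HGs n) => G0 _ _; have [Uq|nUq] := pselect (U q).
  - rewrite (_ : _ @^-1` _ = setT); first exact: GsetT.
    by apply/seteqP; split => x //=.
  - rewrite (_ : _ @^-1` _ = set0) //.
    by apply/seteqP; split => x //=.
have GmeR : forall n (f : Omega -> \bar R), Gmeas_eR (G n) f -> measurable_fun setT f.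
  by move=> n f hf _ B mB; rewrite setTI; exact: HGm _ _ (hf B mB).
have : [set: Omega] != set0.
  apply/eqP => h; have := probability_setT P; rewrite h measure0 => /eqP.
  by rewrite eqe eq_sym oner_eq0.
move=> /set0P[om0 _].
pose q0 := pi 0%N om0.
have Pq0 : Pol q0 by exact: HpiP.
have W0 : (0 < W)%R.
  rewrite /W; case: N HN Hwt {HpiP Hpimeas Hunbiased HJint Hregm W} => // N' _ Hwt'.
  rewrite big_ord_recl.
  have h1 := Hwt' 0%N isT.
  have h2 : (0 <= \sum_(i < N') wt (bump 0 i))%R.
    by apply: sumr_ge0 => i _; apply: ltW; apply: Hwt'; rewrite /bump /=; exact: ltn_ord.
  lra.
pose th := fun n => (wt n / W)%R.
have th0 : forall n, (n < N)%N -> (0 < th n)%R.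
  by move=> n hn; rewrite /th divr_gt0 // Hwt.
have th1 : (\sum_(n < N) th n = 1)%R.
  by rewrite /th -mulr_suml -/W divff // gt_eqF.
have intq : forall n (q : V), (n < N)%N -> Pol q ->
    P.-integrable setT (fun w => (ft n w (pi n w) q)%:E).
  by move=> n q hn Pq; exact: (Hunbiased n hn (fun _ => q) (Gcst n q) (fun _ => Pq)).1.
have intpi : forall n, (n < N)%N ->
    P.-integrable setT (fun w => (ft n w (pi n w) (pi n w))%:E).
  by move=> n hn; exact: (Hunbiased n hn (pi n) (Hpimeas n hn) (fun w => HpiP n w hn)).1.
have step1 : forall n, (n < N)%N -> (\int[P]_w (J (pi n w))%:E <=
    Jstar%:E + Cstar%:E * \int[P]_w (ft n w (pi n w) (pi n w))%:E)%E.
  move=> n hn.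
  have [hint [hFm hFint]] := Hunbiased n hn (pi n) (Hpimeas n hn) (fun w => HpiP n w hn).
  rewrite hFint; last exact: GsetT.
  have mF := GmeR _ _ hFm.
  have F0 : forall w, (0 <= Fcost dist Dfun (pi n w) (pi n w))%E.
    move=> w; apply: integral_ge0 => x _; rewrite lee_fin; apply: HD0; exact: HpiP.
  have cint := finite_measure_integrable_cst P Jstar measurableT.
  have e1 : (\int[P]_w ((J (pi n w))%:E - Jstar%:E) =
      \int[P]_w (J (pi n w))%:E - Jstar%:E)%E.
    rewrite (integralB measurableT (HJint n hn) cint).
    rewrite (@integral_cst _ _ _ P setT measurableT Jstar%:E).
    congr (_ - _)%E; rewrite -[RHS]mule1; congr (_ * _)%E; exact: probability_setT.
  rewrite -leeBlDl // -e1.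
  rewrite -(ge0_integralZl_EFin P measurableT (fun w _ => F0 w) mF HC).
  apply: mono_int.
  - exact: (measurable_int _ (integrableB measurableT (HJint n hn) cint)).
  - exact: measurable_funeM.
  - move=> w /=; rewrite -EFinB; exact: Hperf (HpiP n w hn).
pose a := fun n => fine (\int[P]_w (J (pi n w))%:E).
pose b := fun n => fine (\int[P]_w (ft n w (pi n w) (pi n w))%:E).
have intsum : forall (g : nat -> Omega -> R),
   (forall n, (n < N)%N -> P.-integrable setT (fun w => (g n w)%:E)) ->
   P.-integrable setT (fun w => (\sum_(n < N) th n * g n w)%:E) /\
   (\int[P]_w (\sum_(n < N) th n * g n w)%:E =
     (\sum_(n < N) th n * fine (\int[P]_w (g n w)%:E))%:E)%E.
  move=> g hg.
  have e : (fun w => (\sum_(n < N) th n * g n w)%:E) =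
           (fun w => \sum_(n < N) (th n)%:E * (g n w)%:E)%E.
    by apply: funext => w; rewrite -sumEFin; apply: eq_bigr => i _; rewrite EFinM.
  have hi : forall i : 'I_N, P.-integrable setT (fun w => (th i)%:E * (g i w)%:E)%E.
    by move=> i; apply: integrableZl => //; exact: (hg i (ltn_ord i)).
  rewrite e; split; first by apply: integrable_sum => // i _; exact: hi.
  rewrite (integral_sum measurableT hi) -sumEFin; apply: eq_bigr => i _.
  rewrite integralZl //; last exact: (hg i (ltn_ord i)).
  by rewrite [RHS]EFinM fineK // integrable_fin_num //; exact: (hg i (ltn_ord i)).
pose A := fun w => (\sum_(n < N) th n * ft n w (pi n w) (pi n w))%R.
pose B := fun (p : V) w => (\sum_(n < N) th n * ft n w (pi n w) p)%R.
have intA : P.-integrable setT (fun w => (A w)%:E) by exact: (intsum _ intpi).1.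
have hAint : (\int[P]_w (A w)%:E = (\sum_(n < N) th n * b n)%:E)%E
  by exact: (intsum _ intpi).2.
have intB : P.-integrable setT (fun w => (B q0 w)%:E)
  by exact: (intsum (fun n w => ft n w (pi n w) q0) (fun n hn => intq n q0 hn Pq0)).1.
have hJ : (\int[P]_w (\sum_(n < N) th n * J (pi n w))%:E = (\sum_(n < N) th n * a n)%:E)%E
  by exact: (intsum _ HJint).2.
have eL : (fun w => (\sum_(n < N) wt n * J (pi n w) / W)%:E) =
          (fun w => (\sum_(n < N) th n * J (pi n w))%:E).
  by apply: funext => w; congr EFin; apply: eq_bigr => i _; rewrite /th mulrAC.
have key : (\sum_(n < N) th n * a n <= Jstar + Cstar * \sum_(n < N) th n * b n)%R.
  apply: (@le_trans _ _ (\sum_(n < N) th n * (Jstar + Cstar * b n))%R).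
    apply: ler_sum => i _.
    have := step1 i (ltn_ord i).
    rewrite -(fineK (integrable_fin_num measurableT (HJint i (ltn_ord i)))).
    rewrite -(fineK (integrable_fin_num measurableT (intpi i (ltn_ord i)))).
    rewrite -EFinM -EFinD lee_fin -/(a i) -/(b i) => hle.
    apply: ler_wpM2l => //; exact: ltW (th0 i (ltn_ord i)).
  rewrite (eq_bigr (fun i : 'I_N => Jstar * th i + Cstar * (th i * b i))%R); last first.
    by move=> i _; ring.
  by rewrite big_split /= -!mulr_sumr th1 mulr1.
pose Rw := fun w => (wregret Pol ft pi N wt w * (W^-1)%:E)%E.
have hRw : forall w p, Pol p -> ((A w - B p w)%:E <= Rw w)%E.
  move=> w p Pp; rewrite /Rw.
  have -> : (A w - B p w = (\sum_(n < N) (wt n * ft n w (pi n w) (pi n w)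
                 - wt n * ft n w (pi n w) p)) * W^-1)%R.
    rewrite /A /B /th big_distrl /= -sumrB; apply: eq_bigr => i _; ring.
  rewrite EFinM; apply: lee_wpmul2r; first by rewrite lee_fin invr_ge0 ltW.
  by apply: ereal_sup_ubound; exists p.
have hE : forall w, ((A w)%:E - Rw w <= eps_inner Pol ft N th w)%E.
  move=> w; apply: (@le_trans _ _ (ereal_inf [set (B p w)%:E | p in Pol])).
  - apply: le_ereal_inf_tmp => _ [p Pp <-].
    apply: le_trans (leeB (lexx (A w)%:E) (hRw w p Pp)) _.
    by rewrite -EFinB lee_fin; lra.
  - apply: ereal_sup_ubound; exists (fun n => pi n w) => //.
    by move=> n hn; exact: HpiP.
have [mE intE] := Heps N th th0 th1.
have mRw : measurable_fun setT Rw.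
  rewrite /Rw (_ : (fun w => _) = (fun w => (W^-1)%:E * wregret Pol ft pi N wt w)%E).
    exact: measurable_funeM.
  by apply: funext => w; rewrite muleC.
have step3 : ((\sum_(n < N) th n * b n)%:E <= eps%:E + \int[P]_w Rw w)%E.
  rewrite -hAint.
  have [Rinf|Rfin] := eqVneq (\int[P]_w Rw w)%E +oo%E.
    by rewrite Rinf addey // leey.
  have intL : P.-integrable setT (fun w => ((A w)%:E - (B q0 w)%:E)%E)
    := integrableB measurableT intA intB.
  have intR : P.-integrable setT Rw.
    apply: (@integrable_of_lb _ _ _ P _ _ mRw intL) => // w; rewrite -EFinB; exact: hRw.
  have : (\int[P]_w (A w)%:E - \int[P]_w Rw w <= eps%:E)%E.
    rewrite -(integralB measurableT intA intR).
    apply: le_trans intE.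
    apply: mono_int => //.
    exact: (measurable_int _ (integrableB measurableT intA intR)).
  by rewrite leeBlDr // integrable_fin_num.
rewrite eL hJ.
apply: (@le_trans _ _ (Jstar + Cstar * \sum_(n < N) th n * b n)%:E).
  by rewrite lee_fin.
rewrite EFinD EFinM; apply: leeD2l; apply: lee_wpmul2l; first by rewrite lee_fin.
exact: step3.
Qed.
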